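(* Let $$A= \begin{pmatrix} 1& -2& 2\\ 2&-1& 2\\ 2&-2& 3 \end{pmatrix},\quad B= \begin{pmatrix} 1& 2& 2\\ 2&1& 2\\ 2&2& 3 \end{pmatrix},\quad C= \begin{pmatrix} -1& 2& 2\\ -2&1& 2\\ -2&2& 3 \end{pmatrix},$$ and let $P=(x,y,z)$ be a primitive Pythagorean triple. Then the points of $\mathbb{R}^3$ with coordinates $AP^\top$, $BP^\top$, $CP^\top$ form a triangle that is not a right triangle (none of its angles equals $\pi/2$).
   Context: A primitive Pythagorean triple is a triple $(x,y,z)$ of positive integers with $x^2+y^2=z^2$, $\gcd(x,y)=1$ and $x$ odd. Triples are regarded as row vectors and $\top$ denotes transpose; $\mathbb{R}^3$ carries the Euclidean metric. *)

(* Defs.v *)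
From HB Require Import structures.
From mathcomp Require Import all_boot all_order all_algebra.
From mathcomp Require Import all_classical all_reals all_analysis.
Set Implicit Arguments. Unset Strict Implicit. Unset Printing Implicit Defensive.
Import Order.TTheory GRing.Theory Num.Theory.
Local Open Scope ring_scope.

Definition mx3 (r0 r1 r2 : int * int * int) : 'M[int]_3 :=
  \matrix_(i < 3, j < 3)
    let r := nth r0 [:: r0; r1; r2] i in
    nth 0 [:: r.1.1; r.1.2; r.2] j.

Definition matA : 'M[int]_3 := mx3 (1, -2, 2) (2, -1, 2) (2, -2, 3).
Definition matB : 'M[int]_3 := mx3 (1, 2, 2) (2, 1, 2) (2, 2, 3).
Definition matC : 'M[int]_3 := mx3 (-1, 2, 2) (-2, 1, 2) (-2, 2, 3).

Definition primitive_pyth (x y z : nat) : Prop :=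
  [/\ (0 < x)%N /\ (0 < y)%N /\ (0 < z)%N, (x ^ 2 + y ^ 2)%N = (z ^ 2)%N,
      coprime x y & odd x].

Definition trip (x y z : nat) : 'rV[int]_3 :=
  \row_(j < 3) (nth 0 [:: x; y; z] j)%:Z.

Definition pt (R : realType) (M : 'M[int]_3) (P : 'rV[int]_3) : 'cV[R]_3 :=
  map_mx (fun k : int => k%:~R) (M *m P^T).

Definition dot3 (R : realType) (u v : 'cV[R]_3) : R := (u^T *m v) 0 0.
Definition norm3 (R : realType) (u : 'cV[R]_3) : R := Num.sqrt (dot3 u u).
Definition vangle (R : realType) (u v : 'cV[R]_3) : R :=
  acos (dot3 u v / (norm3 u * norm3 v)).

Definition tri_angle (R : realType) (p q r : 'cV[R]_3) : R :=
  vangle (q - p) (r - p).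

Definition is_triangle (R : realType) (p q r : 'cV[R]_3) : Prop :=
  \rank (row_mx (q - p) (r - p)) = 2%N.

Definition right_triangle (R : realType) (p q r : 'cV[R]_3) : Prop :=
  tri_angle p q r = pi / 2 \/ tri_angle q r p = pi / 2 \/
  tri_angle r p q = pi / 2.

(* Main.v *)
Require Import Defs.
From HB Require Import structures.
From mathcomp Require Import all_boot all_order all_algebra.
From mathcomp Require Import all_classical all_reals all_analysis.
From mathcomp Require Import ring lra zify.
Import Order.TTheory GRing.Theory Num.Theory.
Local Open Scope ring_scope.
Lemma natcontra (x y z : nat) : (9 * y = 8 * x)%N -> coprime x y -> (x ^ 2 + y ^ 2)%N = (z ^ 2)%N -> False.
Proof.
move=> E cop pyth.
have h9 : (9 %| x)%N.
  have : (9 %| 8 * x)%N by rewrite -E dvdn_mulr.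
  by rewrite Gauss_dvdr.
case/dvdnP: h9 => k hk; subst x.
have hy : y = (k * 8)%N by lia.
subst y.
have : (k %| gcdn (k * 9) (k * 8))%N by rewrite dvdn_gcd !dvdn_mulr.
move: cop; rewrite /coprime => /eqP ->; rewrite dvdn1 => /eqP hk; subst k.
have : (z <= 12 \/ 13 <= z)%N by lia.
move: pyth => /= pyth. case => h; nia.
Qed.
Lemma oddcontra (x y : nat) : (9 * x = 8 * y)%N -> odd x -> False.
Proof. move=> E ho; have := congr1 odd E; rewrite !oddM /= ho. done. Qed.
Lemma ptA (R : realType) x y z (i : 'I_3) :
  pt R matA (trip x y z) i 0 =
  nth 0 [:: x%:R - 2 * y%:R + 2 * z%:R; 2 * x%:R - y%:R + 2 * z%:R; 2 * x%:R - 2*y%:R + 3 * z%:R] i.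
Proof.
rewrite /pt !mxE !big_ord_recr big_ord0 /= !mxE /=.
by case: i => [[|[|[|]]]] //= _; rewrite !(intrD, intrM) /=; ring.
Qed.

Lemma dotE (R : realType) (u v : 'cV[R]_3) :
  dot3 u v = \sum_(i < 3) u i 0 * v i 0.
Proof. by rewrite /dot3 !mxE; apply: eq_bigr => i _; rewrite !mxE. Qed.

Lemma key {R : realType} (u v : 'cV[R]_3) u0 u1 u2 v0 v1 v2 :
  (forall i : 'I_3, u i 0 = nth 0 [:: u0; u1; u2] i) ->
  (forall i : 'I_3, v i 0 = nth 0 [:: v0; v1; v2] i) ->
  0 < u0^+2 + u1^+2 + u2^+2 -> 0 < v0^+2 + v1^+2 + v2^+2 ->
  vangle u v = pi / 2 -> u0 * v0 + u1 * v1 + u2 * v2 = 0.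
Proof.
move=> Hu Hv HU HV.
rewrite /vangle /norm3 !dotE !big_ord_recr !big_ord0 /= !Hu !Hv /= !add0r.
set d := u0 * v0 + u1 * v1 + u2 * v2.
rewrite -!expr2.
set U := _ + u2 ^+ 2. set V := _ + v2 ^+ 2.
set t := d / _.
have sU := sqrtr_gt0 U; have sV := sqrtr_gt0 V.
have hSU := sqr_sqrtr (ltW HU). have hSV := sqr_sqrtr (ltW HV).
have dle : d ^+ 2 <= U * V.
  rewrite -subr_ge0 (_ : U * V - d ^+ 2 = (u0 * v1 - u1 * v0) ^+ 2 + (u0 * v2 - u2 * v0) ^+ 2 + (u1 * v2 - u2 * v1) ^+ 2); last by rewrite /U /V /d; ring.
  by rewrite !addr_ge0 ?sqr_ge0.
have t2 : t ^+ 2 <= 1.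
  rewrite /t expr_div_n exprMn hSU hSV ler_pdivrMr ?mul1r //; nra.
have tI : t \in `[-1, 1].
  rewrite in_itv /=; apply/andP; split; nra.
move=> ht.
have : cos (acos t) = cos (pi / 2) by rewrite ht.
rewrite acosK // cos_pihalf /t => /eqP; rewrite mulf_eq0 invr_eq0 => /orP[/eqP //|].
rewrite mulf_eq0 !gt_eqF ?sqrtr_gt0 //.
Qed.
Lemma rank2 {R : realType} (u v : 'cV[R]_3) u0 u1 u2 v0 v1 v2 :
  (forall i : 'I_3, u i 0 = nth 0 [:: u0; u1; u2] i) ->
  (forall i : 'I_3, v i 0 = nth 0 [:: v0; v1; v2] i) ->
  u0 * v1 - u1 * v0 != 0 -> \rank (row_mx u v) = 2%N.
Proof.
move=> Hu Hv Hd.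
set M := row_mx u v.
have HM : forall (k : 'I_3) (i : 'I_2), M k i = nth 0 [:: nth 0 [:: u0; u1; u2] k; nth 0 [:: v0; v1; v2] k] i.
  move=> k i; rewrite /M mxE; case: splitP => j Hj.
    by rewrite Hj (ord1 j) Hu.
  by rewrite Hj (ord1 j) Hv.
set dt := u0 * v1 - u1 * v0.
pose B : 'M[R]_(3, 2) := \matrix_(k < 3, j < 2)
   nth 0 [:: nth 0 [:: v1 / dt; - u1 / dt] j; nth 0 [:: - v0 / dt; u0 / dt] j] k.
have HB : M^T *m B = 1%:M.
  apply/matrixP => i j; rewrite [LHS]mxE; under eq_bigr => k _ do rewrite mxE HM mxE.
  rewrite !big_ord_recr big_ord0 /= mxE.
  case: i => [[|[|i]] Hi] //=; case: j => [[|[|j]] Hj] //=; by rewrite /dt; field.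
apply/eqP; rewrite eqn_leq rank_leq_col /= -mxrank_tr.
have := mxrankM_maxl M^T B; rewrite HB mxrank1; done.
Qed.

Lemma ptB (R : realType) x y z (i : 'I_3) :
  pt R matB (trip x y z) i 0 =
  nth 0 [:: x%:R + 2 * y%:R + 2 * z%:R; 2 * x%:R + y%:R + 2 * z%:R; 2 * x%:R + 2*y%:R + 3 * z%:R] i.
Proof.
rewrite /pt !mxE !big_ord_recr big_ord0 /= !mxE /=.
by case: i => [[|[|[|]]]] //= _; rewrite !(intrD, intrM) /=; ring.
Qed.

Lemma ptC (R : realType) x y z (i : 'I_3) :
  pt R matC (trip x y z) i 0 =
  nth 0 [:: -1 * x%:R + 2 * y%:R + 2 * z%:R; - 2 * x%:R + y%:R + 2 * z%:R; - 2 * x%:R + 2*y%:R + 3 * z%:R] i.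
Proof.
rewrite /pt !mxE !big_ord_recr big_ord0 /= !mxE /=.
by case: i => [[|[|[|]]]] //= _; rewrite !(intrD, intrM) /=; ring.
Qed.

Lemma subE {R : realType} (a b : 'cV[R]_3) a0 a1 a2 b0 b1 b2 :
  (forall i : 'I_3, a i 0 = nth 0 [:: a0; a1; a2] i) ->
  (forall i : 'I_3, b i 0 = nth 0 [:: b0; b1; b2] i) ->
  (forall i : 'I_3, (b - a) i 0 = nth 0 [:: b0 - a0; b1 - a1; b2 - a2] i).
Proof.
move=> Ha Hb i; rewrite !mxE Ha Hb.
by case: i => [[|[|[|i]]] Hi] //=; rewrite subr0.
Qed.

Arguments subE {R a b a0 a1 a2 b0 b1 b2}.
Arguments rank2 {R u v u0 u1 u2 v0 v1 v2}.
Arguments key {R u v u0 u1 u2 v0 v1 v2}.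

Theorem mainTheorem13 (R : realType) (x y z : nat) :
  primitive_pyth x y z ->
  let a : 'cV[R]_3 := pt R matA (trip x y z) in
  let b : 'cV[R]_3 := pt R matB (trip x y z) in
  let c : 'cV[R]_3 := pt R matC (trip x y z) in
  is_triangle a b c /\ ~ right_triangle a b c.
Proof.
case=> [[hx [hy hz]] hpyth hcop hodd] a b c.
have Ha := ptA R x y z; have Hb := ptB R x y z; have Hc := ptC R x y z.
have X0 : (0 : R) < x%:R by rewrite ltr0n.
have Y0 : (0 : R) < y%:R by rewrite ltr0n.
have XY : (0 : R) < x%:R * y%:R by rewrite mulr_gt0.
have XX : (0 : R) < x%:R ^+ 2 by rewrite exprn_gt0.
have YY : (0 : R) < y%:R ^+ 2 by rewrite exprn_gt0.
have XmY : (0 : R) <= (x%:R - y%:R) ^+ 2 by rewrite sqr_ge0.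
split.
  rewrite /is_triangle /a /b /c. apply: (rank2 (subE Ha Hb) (subE Ha Hc)).
  by apply/eqP => h; clear -h XY; nra.
rewrite /right_triangle /tri_angle /a /b /c; case=> [h|[h|h]].
- have := key (subE Ha Hb) (subE Ha Hc) _ _ h.
  move=> /(_ ltac:(clear -XY XX YY XmY; nra)) /(_ ltac:(clear -XY XX YY XmY; nra)) H.
  have : (2 * y%:R) * (18 * y%:R - 16 * x%:R) = 0 :> R by rewrite -H; ring.
  move/eqP; rewrite mulf_eq0 (gt_eqF (mulr_gt0 _ Y0)) ?ltr0n //= => /eqP H2.
  apply: (@natcontra x y z _ hcop hpyth).
  by apply/eqP; rewrite -(eqr_nat R) !natrM; apply/eqP; lra.
- have := key (subE Hb Hc) (subE Hb Ha) _ _ h.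
  move=> /(_ ltac:(clear -XY XX YY XmY; nra)) /(_ ltac:(clear -XY XX YY XmY; nra)) H.
  clear -H XY; nra.
- have := key (subE Hc Ha) (subE Hc Hb) _ _ h.
  move=> /(_ ltac:(clear -XY XX YY XmY; nra)) /(_ ltac:(clear -XY XX YY XmY; nra)) H.
  have : (2 * x%:R) * (18 * x%:R - 16 * y%:R) = 0 :> R by rewrite -H; ring.
  move/eqP; rewrite mulf_eq0 (gt_eqF (mulr_gt0 _ X0)) ?ltr0n //= => /eqP H2.
  apply: (@oddcontra x y _ hodd).
  by apply/eqP; rewrite -(eqr_nat R) !natrM; apply/eqP; lra.
Qed.
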